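(* The variety $\mathsf{V}(S_{(4,471)})$ is the ai-semiring variety defined by the identities $xy\approx yx$, $x^2\approx x^2+xy$, $x_1\approx x_1+x_2x_3x_4$.
   Context: An ai-semiring is an algebra $(S,+,\cdot)$ with $(S,+)$ a semilattice, $(S,\cdot)$ a semigroup, and both distributive laws. $\mathsf{V}(S)$ is the variety generated by $S$; ''the ai-semiring variety defined by identities $\Sigma$'' is the class of all ai-semirings satisfying $\Sigma$ (equivalently, an identity holds in $S$ iff it follows from $\Sigma$ and the ai-semiring axioms). $S_{(4,471)}$ has carrier $\{1,2,3,4\}$; addition: $x+x=x$, $2+x=x$, $1+x=1$ for all $x$, $3+4=1$; multiplication (row $a$, column $b$ gives $a\cdot b$): row $1$: $3,2,2,3$; row $2$: $2,2,2,2$; row $3$: $2,2,2,2$; row $4$: $3,2,2,3$. *)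

(* Defs.v *)
From Stdlib Require Import List.

Inductive term : Type :=
| Var : nat -> term
| Add : term -> term -> term
| Mul : term -> term -> term.

Fixpoint eval {A : Type} (add mul : A -> A -> A) (v : nat -> A) (t : term) : A :=
  match t with
  | Var n => v n
  | Add t1 t2 => add (eval add mul v t1) (eval add mul v t2)
  | Mul t1 t2 => mul (eval add mul v t1) (eval add mul v t2)
  end.

Definition satisfies {A : Type} (add mul : A -> A -> A) (u v : term) : Prop :=
  forall val : nat -> A, eval add mul val u = eval add mul val v.

Definition is_ai_semiring {A : Type} (add mul : A -> A -> A) : Prop :=
  (forall x y z, add x (add y z) = add (add x y) z) /\
  (forall x y, add x y = add y x) /\
  (forall x, add x x = x) /\
  (forall x y z, mul x (mul y z) = mul (mul x y) z) /\
  (forall x y z, mul x (add y z) = add (mul x y) (mul x z)) /\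
  (forall x y z, mul (add x y) z = add (mul x z) (mul y z)).

Definition x_ (n : nat) : term := Var n.

Definition Sigma : list (term * term) :=
  (Mul (x_ 0) (x_ 1), Mul (x_ 1) (x_ 0)) ::
  (Mul (x_ 0) (x_ 0), Add (Mul (x_ 0) (x_ 0)) (Mul (x_ 0) (x_ 1))) ::
  (x_ 1, Add (x_ 1) (Mul (Mul (x_ 2) (x_ 3)) (x_ 4))) :: nil.

Definition satisfies_all {A : Type} (add mul : A -> A -> A)
    (E : list (term * term)) : Prop :=
  forall p, List.In p E -> satisfies add mul (fst p) (snd p).

Definition holds_in_variety_of (E : list (term * term)) (u v : term) : Prop :=
  forall (A : Type) (add mul : A -> A -> A),
    is_ai_semiring add mul -> satisfies_all add mul E -> satisfies add mul u v.

Inductive S4 : Type := e1 | e2 | e3 | e4.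

Definition S_add (a b : S4) : S4 :=
  match a, b with
  | e1, _ => e1
  | _, e1 => e1
  | e2, x => x
  | x, e2 => x
  | e3, e3 => e3
  | e4, e4 => e4
  | e3, e4 => e1
  | e4, e3 => e1
  end.

Definition S_mul (a b : S4) : S4 :=
  match a, b with
  | e1, e1 => e3 | e1, e2 => e2 | e1, e3 => e2 | e1, e4 => e3
  | e2, _ => e2
  | e3, _ => e2
  | e4, e1 => e3 | e4, e2 => e2 | e4, e3 => e2 | e4, e4 => e3
  end.

(* Main.v *)
From Stdlib Require Import List Arith Bool.
Import ListNotations.
Require Import Defs.

Fixpoint words (t : term) : list (list nat) :=
  match t with
  | Var n => [[n]]
  | Add a b => words a ++ words b
  | Mul a b => flat_map (fun w1 => map (fun w2 => w1 ++ w2) (words b)) (words a)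
  end.

Lemma flat_map_nonnil {X Y} (f : X -> list Y) l :
  l <> nil -> (forall x, f x <> nil) -> flat_map f l <> nil.
Proof.
  destruct l as [|x l]; [congruence|]. intros _ H. simpl.
  specialize (H x). destruct (f x); simpl; congruence.
Qed.

Lemma words_nonnil t : words t <> nil /\ (forall w, In w (words t) -> w <> nil).
Proof.
  induction t as [n|a [Ha1 Ha2] b [Hb1 Hb2]|a [Ha1 Ha2] b [Hb1 Hb2]]; simpl.
  - split; [congruence|]. intros w [<-|[]]; congruence.
  - split.
    + destruct (words a); simpl; congruence.
    + intros w Hw. apply in_app_or in Hw. destruct Hw; auto.
  - split.
    + apply flat_map_nonnil; auto. intros x. destruct (words b); simpl; congruence.
    + intros w Hw. apply in_flat_map in Hw. destruct Hw as [w1 [H1 H2]].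
      apply in_map_iff in H2. destruct H2 as [w2 [<- _]].
      specialize (Ha2 _ H1). destruct w1; simpl; congruence.
Qed.

Section Gen.
Variable A : Type.
Variables add mul : A -> A -> A.
Variable d : A.
Hypothesis addA : forall x y z, add x (add y z) = add (add x y) z.
Hypothesis addC : forall x y, add x y = add y x.
Hypothesis addI : forall x, add x x = x.
Hypothesis mulA : forall x y z, mul x (mul y z) = mul (mul x y) z.
Hypothesis mulDr : forall x y z, mul x (add y z) = add (mul x y) (mul x z).
Hypothesis mulDl : forall x y z, mul (add x y) z = add (mul x z) (mul y z).
Variable val : nat -> A.

Fixpoint J (l : list A) : A :=
  match l with
  | nil => d
  | a :: l' => match l' with nil => a | _ => add a (J l') end
  end.

Lemma J_cons a l : l <> nil -> J (a :: l) = add a (J l).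
Proof. destruct l; [congruence|reflexivity]. Qed.

Lemma J_app l1 l2 : l1 <> nil -> l2 <> nil -> J (l1 ++ l2) = add (J l1) (J l2).
Proof.
  induction l1 as [|a l1 IH]; intros H1 H2; [congruence|].
  destruct l1 as [|b l1].
  - change ([a] ++ l2) with (a :: l2). rewrite J_cons; auto.
  - change ((a :: b :: l1) ++ l2) with (a :: ((b :: l1) ++ l2)).
    rewrite J_cons by (simpl; congruence).
    rewrite IH by congruence. rewrite (J_cons a (b :: l1)) by congruence.
    apply addA.
Qed.

Lemma J_mulr l b : J (map (fun a => mul a b) l) = mul (J l) b \/ l = nil.
Proof.
  induction l as [|a l IH]; [now right|left].
  destruct l as [|c l]; [reflexivity|].
  destruct IH as [IH|IH]; [|discriminate].
  change (map (fun a => mul a b) (a :: c :: l)) with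
    (mul a b :: map (fun a => mul a b) (c :: l)).
  rewrite J_cons by (simpl; congruence). rewrite IH.
  rewrite (J_cons a (c :: l)) by congruence. now rewrite mulDl.
Qed.

Lemma J_mull l b : J (map (fun a => mul b a) l) = mul b (J l) \/ l = nil.
Proof.
  induction l as [|a l IH]; [now right|left].
  destruct l as [|c l]; [reflexivity|].
  destruct IH as [IH|IH]; [|discriminate].
  change (map (fun a => mul b a) (a :: c :: l)) with
    (mul b a :: map (fun a => mul b a) (c :: l)).
  rewrite J_cons by (simpl; congruence). rewrite IH.
  rewrite (J_cons a (c :: l)) by congruence. now rewrite mulDr.
Qed.

Lemma J_flat {X} (f : X -> list A) l : (forall x, f x <> nil) ->
  J (flat_map f l) = J (map (fun x => J (f x)) l).
Proof.
  intros Hf. induction l as [|x l IH]; [reflexivity|].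
  destruct l as [|y l].
  - simpl. rewrite app_nil_r. reflexivity.
  - change (flat_map f (x :: y :: l)) with (f x ++ flat_map f (y :: l)).
    rewrite J_app; auto. 2: apply flat_map_nonnil; auto; congruence.
    rewrite IH. reflexivity.
Qed.

Fixpoint ew (w : list nat) : A :=
  match w with
  | nil => d
  | a :: w' => match w' with nil => val a | _ => mul (val a) (ew w') end
  end.

Lemma ew_cons a w : w <> nil -> ew (a :: w) = mul (val a) (ew w).
Proof. destruct w; [congruence|reflexivity]. Qed.

Lemma ew_app w1 w2 : w1 <> nil -> w2 <> nil -> ew (w1 ++ w2) = mul (ew w1) (ew w2).
Proof.
  induction w1 as [|a w1 IH]; intros H1 H2; [congruence|].
  destruct w1 as [|b w1].
  - change ([a] ++ w2) with (a :: w2). rewrite ew_cons; auto.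
  - change ((a :: b :: w1) ++ w2) with (a :: ((b :: w1) ++ w2)).
    rewrite ew_cons by (simpl; congruence).
    rewrite IH by congruence. rewrite (ew_cons a (b :: w1)) by congruence.
    apply mulA.
Qed.

Lemma eval_words t : eval add mul val t = J (map ew (words t)).
Proof.
  induction t as [n|a IHa b IHb|a IHa b IHb]; simpl.
  - reflexivity.
  - rewrite map_app, J_app, IHa, IHb; auto.
    all: destruct (words_nonnil a), (words_nonnil b).
    all: intro E; apply map_eq_nil in E; auto.
  - destruct (words_nonnil a) as [Na Wa], (words_nonnil b) as [Nb Wb].
    rewrite IHa, IHb. symmetry.
    rewrite flat_map_concat_map, concat_map, map_map, <- flat_map_concat_map.
    rewrite J_flat.
    2: { intros x E. apply map_eq_nil in E. apply map_eq_nil in E. auto. }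
    transitivity (J (map (fun w1 => mul (ew w1) (J (map ew (words b)))) (words a))).
    { f_equal. apply map_ext_in. intros w1 Hw1. rewrite map_map.
      transitivity (J (map (fun x => mul (ew w1) x) (map ew (words b)))).
      { f_equal. rewrite map_map. apply map_ext_in. intros; apply ew_app; auto. }
      destruct (J_mull (map ew (words b)) (ew w1)) as [E|E]; [exact E|].
      apply map_eq_nil in E. congruence. }
    rewrite <- (map_map ew (fun x => mul x (J (map ew (words b))))).
    destruct (J_mulr (map ew (words a)) (J (map ew (words b)))) as [E|E]; [exact E|].
    apply map_eq_nil in E. congruence.
Qed.

Definition le a b := add a b = b.

Lemma le_trans a b c : le a b -> le b c -> le a c.
Proof. unfold le. intros H1 H2. rewrite <- H2, addA, H1. reflexivity. Qed.

Lemma J_upper a l : In a l -> le a (J l).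
Proof.
  unfold le. induction l as [|b l IH]; [intros []|].
  intros [<-|H].
  - destruct l; simpl; [apply addI|]. rewrite addA, addI. reflexivity.
  - destruct l as [|c l]; [destruct H|].
    rewrite J_cons by congruence. rewrite addA, (addC a b), <- addA, IH; auto.
Qed.

Lemma J_least c l : l <> nil -> (forall a, In a l -> le a c) -> le (J l) c.
Proof.
  unfold le. induction l as [|b l IH]; [congruence|]. intros _ H.
  destruct l as [|e l]; [apply H; simpl; auto|].
  rewrite J_cons by congruence. rewrite <- addA, IH.
  - apply H. simpl. auto.
  - congruence.
  - intros. apply H. simpl. auto.
Qed.

Hypothesis mulC : forall x y, mul x y = mul y x.
Hypothesis sq : forall x y, mul x x = add (mul x x) (mul x y).
Hypothesis lng : forall a b c e, a = add a (mul (mul b c) e).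

Definition Cw (W : list (list nat)) x y :=
  In [x; y] W \/ In [y; x] W \/ In [x; x] W \/ In [y; y] W.

Lemma word_le (W1 W2 : list (list nat)) :
  W2 <> nil ->
  (forall x, In [x] W1 -> In [x] W2) ->
  (forall x y, In [x; y] W1 -> Cw W2 x y) ->
  forall w, In w W1 -> w <> nil -> le (ew w) (J (map ew W2)).
Proof.
  intros N2 HL HC w Hw Nw.
  destruct w as [|x [|y [|z r]]]; [congruence| | |].
  - apply J_upper. apply in_map. auto.
  - destruct (HC x y Hw) as [H|[H|[H|H]]].
    + apply J_upper. apply (in_map ew) in H. exact H.
    + apply (in_map ew) in H. apply J_upper in H. simpl in H |- *.
      rewrite mulC. exact H.
    + apply (in_map ew) in H. apply J_upper in H. simpl in H |- *.
      eapply le_trans; [|exact H]. unfold le. rewrite addC, <- sq. reflexivity.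
    + apply (in_map ew) in H. apply J_upper in H. simpl in H |- *.
      eapply le_trans; [|exact H]. unfold le. rewrite mulC, addC, <- sq. reflexivity.
  - unfold le. rewrite ew_cons by congruence. rewrite ew_cons by congruence.
    rewrite mulA. rewrite addC. symmetry. apply lng.
Qed.

Lemma model_eq u v :
  (forall x, In [x] (words u) <-> In [x] (words v)) ->
  (forall x y, In [x; y] (words u) -> Cw (words v) x y) ->
  (forall x y, In [x; y] (words v) -> Cw (words u) x y) ->
  eval add mul val u = eval add mul val v.
Proof.
  intros HL HC1 HC2. rewrite !eval_words.
  destruct (words_nonnil u) as [Nu Wu], (words_nonnil v) as [Nv Wv].
  assert (le1 : forall a b, le a b -> le b a -> a = b).
  { unfold le. intros a b H1 H2. transitivity (add a b); [|exact H1].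
    rewrite addC. symmetry. exact H2. }
  apply le1; apply J_least.
  1,3: intro E; apply map_eq_nil in E; congruence.
  - intros a Ha. apply in_map_iff in Ha. destruct Ha as [w [<- Hw]].
    apply (word_le (words u)); auto. intro x. apply HL.
  - intros a Ha. apply in_map_iff in Ha. destruct Ha as [w [<- Hw]].
    apply (word_le (words v)); auto. intro x. apply HL.
Qed.

End Gen.

Lemma S_ai : is_ai_semiring S_add S_mul.
Proof.
  repeat split; intros; repeat match goal with x : S4 |- _ => destruct x end; reflexivity.
Qed.

Lemma S_sigma : satisfies_all S_add S_mul Sigma.
Proof.
  intros p Hp. simpl in Hp. intro val.
  destruct Hp as [<-|[<-|[<-|[]]]]; simpl;
  repeat match goal with |- context [val ?n] => destruct (val n) end; reflexivity.
Qed.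

Definition h3 (a : S4) : bool := match a with e1 | e3 => true | _ => false end.

Lemma h3_J l : l <> nil -> h3 (J S4 S_add e2 l) = existsb h3 l.
Proof.
  induction l as [|a l IH]; [congruence|]. intros _.
  destruct l as [|b l].
  - simpl. now rewrite orb_false_r.
  - rewrite J_cons by congruence.
    change (existsb h3 (a :: b :: l)) with (h3 a || existsb h3 (b :: l)).
    rewrite <- IH by congruence.
    destruct a, (J S4 S_add e2 (b :: l)); reflexivity.
Qed.

Lemma existsb_ext_in {X} (f g : X -> bool) l :
  (forall x, In x l -> f x = g x) -> existsb f l = existsb g l.
Proof.
  induction l as [|a l IH]; simpl; intros H; auto.
  rewrite H, IH; auto.
Qed.

Lemma existsb_map' {X Y} (f : Y -> bool) (g : X -> Y) l :
  existsb f (map g l) = existsb (fun x => f (g x)) l.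
Proof. induction l; simpl; congruence. Qed.

Lemma S_mul3 a b c : S_mul a (S_mul b c) = e2.
Proof. destruct a, b, c; reflexivity. Qed.

Definition hw (P : nat -> bool) (w : list nat) : bool :=
  match w with [a; b] => P a && P b | _ => false end.

Lemma S_words (u v : term) (val : nat -> S4) (f : list nat -> bool) :
  satisfies S_add S_mul u v ->
  (forall w, w <> nil -> h3 (ew S4 S_mul e2 val w) = f w) ->
  existsb f (words u) = existsb f (words v).
Proof.
  intros H Hf. specialize (H val).
  destruct S_ai as (a1 & a2 & a3 & a4 & a5 & a6).
  rewrite !(eval_words S4 S_add S_mul e2) in H by assumption.
  apply (f_equal h3) in H.
  destruct (words_nonnil u) as [Nu Wu], (words_nonnil v) as [Nv Wv].
  rewrite !h3_J, !existsb_map' in H.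
  2,3: intro E; apply map_eq_nil in E; congruence.
  rewrite (existsb_ext_in _ f (words u)) in H by auto.
  rewrite (existsb_ext_in _ f (words v)) in H by auto.
  exact H.
Qed.

Lemma S_L u v x : satisfies S_add S_mul u v -> In [x] (words u) -> In [x] (words v).
Proof.
  intros H Hx.
  pose (f := fun w : list nat => match w with [a] => a =? x | _ => false end).
  assert (E : existsb f (words u) = existsb f (words v)).
  { apply S_words with (val := fun n => if n =? x then e3 else e2); auto.
    intros w Nw. destruct w as [|a [|b w]]; [congruence| |].
    - simpl. destruct (a =? x); reflexivity.
    - rewrite ew_cons by congruence. unfold f.
      destruct (a =? x); simpl; [reflexivity|].
      destruct (ew S4 S_mul e2 (fun n => if n =? x then e3 else e2) (b :: w)); reflexivity. }
  assert (Hu : existsb f (words u) = true).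
  { apply existsb_exists. exists [x]. simpl. rewrite Nat.eqb_refl. auto. }
  rewrite E in Hu. apply existsb_exists in Hu. destruct Hu as [w [Hw Fw]].
  destruct w as [|a [|b w]]; simpl in Fw; try discriminate.
  apply Nat.eqb_eq in Fw. subst. exact Hw.
Qed.

Lemma S_C u v x y : satisfies S_add S_mul u v -> In [x; y] (words u) -> Cw (words v) x y.
Proof.
  intros H Hx.
  pose (P := fun n => (n =? x) || (n =? y)).
  pose (f := hw P).
  assert (E : existsb f (words u) = existsb f (words v)).
  { apply S_words with (val := fun n => if P n then e4 else e2); auto.
    intros w Nw. destruct w as [|a [|b [|c w]]]; [congruence| | |].
    - simpl. destruct (P a); reflexivity.
    - simpl. unfold f, hw. destruct (P a), (P b); reflexivity.
    - rewrite ew_cons by congruence. rewrite ew_cons by congruence.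
      rewrite S_mul3. reflexivity. }
  assert (Hu : existsb f (words u) = true).
  { apply existsb_exists. exists [x; y]. unfold f, hw, P. simpl.
    rewrite !Nat.eqb_refl, orb_true_r. auto. }
  rewrite E in Hu. apply existsb_exists in Hu. destruct Hu as [w [Hw Fw]].
  destruct w as [|a [|b [|c w]]]; simpl in Fw; try discriminate.
  unfold P in Fw. apply andb_true_iff in Fw. destruct Fw as [Fa Fb].
  apply orb_true_iff in Fa, Fb. unfold Cw.
  destruct Fa as [Fa|Fa], Fb as [Fb|Fb]; apply Nat.eqb_eq in Fa, Fb; subst; tauto.
Qed.

Theorem proposition2p5 :
  forall u v : term,
    satisfies S_add S_mul u v <-> holds_in_variety_of Sigma u v.
Proof.
  intros u v. split.
  - intros H A add mul Hai HS val.
    destruct Hai as (a1 & a2 & a3 & a4 & a5 & a6).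
    assert (mulC : forall x y, mul x y = mul y x).
    { intros x y. exact (HS _ (or_introl eq_refl) (fun n => match n with 0 => x | _ => y end)). }
    assert (sq : forall x y, mul x x = add (mul x x) (mul x y)).
    { intros x y. exact (HS _ (or_intror (or_introl eq_refl)) (fun n => match n with 0 => x | _ => y end)). }
    assert (lng : forall a b c e, a = add a (mul (mul b c) e)).
    { intros a b c e. exact (HS _ (or_intror (or_intror (or_introl eq_refl)))
        (fun n => match n with 1 => a | 2 => b | 3 => c | _ => e end)). }
    apply (model_eq A add mul (val 0)); auto.
    + intro x. split; apply S_L; auto. intro w. symmetry. apply H.
    + intros x y. apply S_C; auto.
    + intros x y. apply S_C. intro w. symmetry. apply H.
  - intros H. apply H; [apply S_ai | apply S_sigma].
Qed.
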